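(* For every probabilistic single-item auction (with $n$ bidders and $m$ types), there exists a mixed signaling scheme maximizing the expected revenue among all mixed signaling schemes that uses at most $m+\min\{\binom{n}{2},\binom{m}{2}\}$ signals.
   Context: A probabilistic single-item auction consists of $n\ge 2$ bidders, $m$ item types, a probability distribution $(p_1,\dots,p_m)$ over types, and nonnegative valuations $v_{i,j}$ (value of bidder $i$ for an item of type $j$). The auctioneer observes the realized type and broadcasts a signal; bidders then participate in a second-price auction, each bidding their expected valuation conditional on the signal. A mixed signaling scheme is a finite set $\mathcal{S}$ of signals and a map $\varphi:[m]\times\mathcal{S}\to[0,1]$ with $\sum_{S\in\mathcal{S}}\varphi(j,S)=1$ for every type $j$. Writing $\psi_{i,j}=p_jv_{i,j}$ and $\mathrm{max2}$ for the second-largest entry of a list (with multiplicity), the expected revenue of $\varphi$ is $\sum_{S\in\mathcal{S}}\mathrm{max2}_i\big\{\sum_j \psi_{i,j}\varphi(j,S)\big\}$. *)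

(* Defs.v *)
From mathcomp Require Import all_boot all_order all_algebra.
From mathcomp Require Import reals.
Set Implicit Arguments. Unset Strict Implicit. Unset Printing Implicit Defensive.
Import Order.TTheory GRing.Theory Num.Theory.
Local Open Scope ring_scope.

Definition max2 {R : realType} {n : nat} (x : 'I_n -> R) : R :=
  nth 0 (sort (fun a b : R => b <= a) [seq x i | i <- enum 'I_n]) 1.

(* A mixed signaling scheme with k signals (signal set 'I_k):
   phi j s = probability of sending signal s when the type is j. *)
Definition is_scheme {R : realType} {m k : nat} (phi : 'I_m -> 'I_k -> R) : Prop :=
  (forall j s, 0 <= phi j s <= 1) /\ (forall j, \sum_(s < k) phi j s = 1).

Definition revenue {R : realType} {n m k : nat}
  (p : 'I_m -> R) (v : 'I_n -> 'I_m -> R) (phi : 'I_m -> 'I_k -> R) : R :=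
  \sum_(s < k) max2 (fun i : 'I_n => \sum_(j < m) (p j * v i j) * phi j s).

(* Main.v *)
Require Import Defs.
From HB Require Import structures.
From mathcomp Require Import all_boot all_order all_algebra.
From mathcomp Require Import reals ring lra.
From mathcomp Require Import boolp classical_sets topology normedtype derive.
Import Order.TTheory GRing.Theory Num.Theory.
Import numFieldNormedType.Exports.
Local Open Scope ring_scope.

Section M2.
Variable R : realType.

Lemma max2_pair n (x : 'I_n -> R) : (2 <= n)%N ->
  exists i0 i1, [/\ i0 != i1, max2 x = x i1, x i1 <= x i0 &
     forall k, k != i0 -> x k <= x i1].
Proof.
move=> n2.
pose r := relpre x (fun a b : R => b <= a).
pose s := sort r (enum 'I_n).
have ss : sorted r s.
  by apply: sort_sorted => a b; rewrite /r /= le_total.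
have tr : transitive r by move=> a b c /= h1 h2; exact: le_trans h2 h1.
have sz : size s = n by rewrite size_sort size_enum_ord.
have rf : reflexive r by move=> a; rewrite /r /= lexx.
have us : uniq s by rewrite sort_uniq enum_uniq.
have i00 : 'I_n by exists 0%N; apply: leq_trans n2.
exists (nth i00 s 0), (nth i00 s 1); split.
- by rewrite nth_uniq // sz //; apply: leq_trans n2.
- by rewrite /max2 sort_map (nth_map i00) ?size_sort ?size_enum_ord.
- have h0 : (0 < size s)%N by rewrite sz; apply: leq_trans n2.
  have h1 : (1 < size s)%N by rewrite sz.
  exact: (sorted_leq_nth tr rf i00 ss 0 1 h0 h1 (leq0n 1)).
- move=> k hk.
  have : k \in s by rewrite mem_sort mem_enum.
  move=> /(nthP i00) [t ht ekt]; rewrite -ekt in hk *.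
  have t0 : t != 0%N by apply/eqP => e; move: hk; rewrite e eqxx.
  have h1 : (1 < size s)%N by rewrite sz.
  have t1 : (1 <= t)%N by rewrite lt0n.
  exact: (sorted_leq_nth tr rf i00 ss 1 t h1 ht t1).
Qed.

Lemma max2_uniq n (x : 'I_n -> R) (a b : 'I_n) :
  a != b -> x b <= x a -> (forall k, k != a -> x k <= x b) ->
  (2 <= n)%N -> max2 x = x b.
Proof.
move=> ab ba hk n2.
have [i0 [i1 [h01 -> h10 hk']]] := @max2_pair n x n2.
apply/le_anti/andP; split.
- have [e|ne] := eqVneq i1 a; last exact: hk.
  rewrite e in h01 h10 *; exact: le_trans h10 (hk _ h01).
- have [e|ne] := eqVneq b i0; last exact: hk'.
  rewrite e in ab ba *; exact: le_trans ba (hk' _ ab).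
Qed.

Lemma max2_scale n (x : 'I_n -> R) (l : R) : (2 <= n)%N -> 0 <= l ->
  max2 (fun i => l * x i) = l * max2 x.
Proof.
move=> n2 l0.
have [i0 [i1 [h01 -> h10 hk]]] := @max2_pair n x n2.
apply: (@max2_uniq n _ i0 i1) => //; first by rewrite ler_wpM2l.
by move=> k hk'; rewrite ler_wpM2l // hk.
Qed.

Lemma max2_lip1 n (x y : 'I_n -> R) (d : R) : (2 <= n)%N ->
  (forall i, `|x i - y i| <= d) -> max2 x - d <= max2 y.
Proof.
move=> n2 hd.
have [i0 [i1 [h01 -> h10 hk]]] := @max2_pair n x n2.
have [j0 [j1 [h01' -> h10' hk']]] := @max2_pair n y n2.
have [k [kj xk]] : exists k, k != j0 /\ x i1 <= x k.
  have [e|ne] := eqVneq i1 j0; last by exists i1; split.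
  by exists i0; rewrite -e; split.
apply: le_trans (hk' _ kj).
have := hd k; rewrite ler_norml => /andP[_ h].
rewrite lerBlDr; apply: le_trans xk _; rewrite -lerBlDl //.
Qed.

Lemma max2_lip n (x y : 'I_n -> R) (d : R) : (2 <= n)%N ->
  (forall i, `|x i - y i| <= d) -> `|max2 x - max2 y| <= d.
Proof.
move=> n2 hd; rewrite ler_norml.
have h1 := @max2_lip1 n x y d n2 hd.
have h2 : max2 y - d <= max2 x by apply: max2_lip1 => // i; rewrite distrC.
apply/andP; split; lra.
Qed.
End M2.

Lemma exists_max (R : realType) k (c : 'I_k.+1 -> R) : exists s0, forall s, c s <= c s0.
Proof.
case: (@arg_maxP _ _ _ ord0 predT c isT) => s0 _ h.
by exists s0 => s; apply: h.
Qed.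

Lemma eq_max2 (R : realType) n (x y : 'I_n -> R) :
  (forall i, x i = y i) -> max2 x = max2 y.
Proof. by move=> h; rewrite /max2; congr nth; congr sort; apply: eq_map. Qed.

Lemma le_one (R : realType) k (a : 'I_k -> R) s0 :
  (forall s, 0 <= a s) -> \sum_s a s = 1 -> a s0 <= 1.
Proof.
move=> h0 h1; rewrite -h1 (bigD1 s0) //= lerDl; exact: sumr_ge0.
Qed.

Section Main.
Variables (R : realType) (n m : nat).
Hypothesis hn : (2 <= n)%N.
Variables (p : 'I_m -> R) (v : 'I_n -> 'I_m -> R).

Definition fval (y : 'I_m -> R) :=
  max2 (fun i : 'I_n => \sum_(j < m) (p j * v i j) * y j).

Lemma fval_ext y z : (forall j, y j = z j) -> fval y = fval z.
Proof. by move=> h; apply: eq_max2 => i; apply: eq_bigr => j _; rewrite h. Qed.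

Lemma fval_scale y l : 0 <= l -> fval (fun j => l * y j) = l * fval y.
Proof.
move=> l0; rewrite /fval -max2_scale //; apply: eq_max2 => i.
by rewrite mulr_sumr; apply: eq_bigr => j _; rewrite mulrCA.
Qed.

Lemma fval0 : fval (fun _ => 0) = 0.
Proof.
have h := @fval_scale (fun _ => 0) 0 (lexx 0); rewrite [RHS]mul0r in h; apply: eq_trans _ h.
by apply: fval_ext => j; rewrite mul0r.
Qed.

Lemma revenueE k (phi : 'I_m -> 'I_k -> R) :
  revenue p v phi = \sum_(s < k) fval (fun j => phi j s).
Proof. by []. Qed.

Lemma revenue_ext k (phi phi' : 'I_m -> 'I_k -> R) :
  (forall j s, phi j s = phi' j s) -> revenue p v phi = revenue p v phi'.
Proof.
by move=> h; rewrite !revenueE; apply: eq_bigr => s _; apply: fval_ext => j.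
Qed.

Lemma scheme_ext k (phi phi' : 'I_m -> 'I_k -> R) :
  (forall j s, phi j s = phi' j s) -> is_scheme phi -> is_scheme phi'.
Proof.
move=> h [h1 h2]; split => [j s|j]; first by rewrite -h.
by rewrite -(h2 j); apply: eq_bigr => s _; rewrite h.
Qed.

Lemma split_sum k (G : 'I_k.+1 -> R) s0 :
  \sum_s G s = G s0 + \sum_(i < k) G (lift s0 i).
Proof. by rewrite (bigD1_ord s0). Qed.

Lemma del k (phi : 'I_m -> 'I_k.+1 -> R) s0 : is_scheme phi ->
  (forall j, phi j s0 = 0) ->
  is_scheme (fun j s => phi j (lift s0 s)) /\
  revenue p v phi = revenue p v (fun j s => phi j (lift s0 s)).
Proof.
move=> [h1 h2] h0; split; first split.
- by move=> j s; apply: h1.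
- by move=> j; have := h2 j; rewrite (@split_sum _ _ s0) h0 add0r.
- rewrite !revenueE (@split_sum _ _ s0).
  have -> : fval (fun j => phi j s0) = 0.
    by rewrite -fval0; apply: fval_ext => j; rewrite h0.
  by rewrite add0r.
Qed.

Definition ext k (phi : 'I_m -> 'I_k -> R) : 'I_m -> 'I_k.+1 -> R :=
  fun j s => if unlift ord_max s is Some s' then phi j s' else 0.
Arguments ext {k}.

Lemma addz k (phi : 'I_m -> 'I_k -> R) : is_scheme phi ->
  is_scheme (ext phi) /\ revenue p v phi = revenue p v (ext phi).
Proof.
move=> [h1 h2]; have e0 : forall j, ext phi j ord_max = 0.
  by move=> j; rewrite /ext unlift_none.
have e1 : forall j i, ext phi j (lift ord_max i) = phi j i.
  by move=> j i; rewrite /ext liftK.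
split; first split.
- move=> j s; rewrite /ext; case: unlift => [s'|]; first exact: h1.
  by rewrite lexx ler01.
- move=> j; rewrite (@split_sum _ _ ord_max) e0 add0r -(h2 j).
  by apply: eq_bigr => i _; rewrite e1.
- rewrite !revenueE (@split_sum _ _ ord_max).
  have -> : fval (fun j => ext phi j ord_max) = 0.
    by rewrite -fval0; apply: fval_ext => j; rewrite e0.
  rewrite add0r; apply: eq_bigr => i _; apply: fval_ext => j.
  by rewrite e1.
Qed.

Lemma up d : forall k (phi : 'I_m -> 'I_k -> R), (k + d = m)%N -> is_scheme phi ->
  exists phi2 : 'I_m -> 'I_m -> R, is_scheme phi2 /\ revenue p v phi <= revenue p v phi2.
Proof.
elim: d => [|d IH] k phi hk hs.
  rewrite addn0 in hk; subst k; by exists phi.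
have [hs' er] := @addz _ _ hs.
have hk1 : (k.+1 + d = m)%N by rewrite addSnnS.
have [phi2 [h2 h3]] := IH k.+1 (ext phi) hk1 hs'.
by exists phi2; split => //; rewrite er.
Qed.

Lemma dep k (y : 'I_k -> 'I_m -> R) : (m < k)%N ->
  exists c : 'I_k -> R, (exists s, c s != 0) /\
    forall j, \sum_(s < k) c s * y s j = 0.
Proof.
move=> mk; pose A := \matrix_(s < k, j < m) y s j.
have : kermx A != 0.
  rewrite kermx_eq0 /row_free; apply/negP => /eqP e.
  by have := rank_leq_col A; rewrite e leqNgt mk.
move=> /matrix0Pn [i [s hs]].
exists (fun s => kermx A i s); split; first by exists s.
move=> j; have := congr1 (fun M : 'M[R]_(k, m) => M i j) (mulmx_ker A).
rewrite !mxE => h; rewrite -[RHS]h; apply: eq_bigr => t _; congr (_ * _); by rewrite mxE.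
Qed.

Lemma pos_entry k (phi : 'I_m -> 'I_k -> R) (c : 'I_k -> R) :
  is_scheme phi -> (forall s, exists j, phi j s != 0) ->
  (exists s, c s != 0) -> (forall j, \sum_s c s * phi j s = 0) ->
  exists s, 0 < c s.
Proof.
move=> [h1 h2] nz [s1 hs1] hdep.
case: (boolP [exists s, 0 < c s]) => [/existsP //|].
rewrite negb_exists => /forallP hneg.
have cle : forall s, c s <= 0 by move=> s; rewrite leNgt; exact: hneg.
have [j hj] := nz s1.
have : \sum_s - (c s * phi j s) = 0 by rewrite sumrN hdep oppr0.
move=> /eqP; rewrite psumr_eq0 => [/allP h|s _].
  have := h s1 (mem_index_enum _); rewrite oppr_eq0 mulf_eq0 (negbTE hs1) /=.
  by rewrite (negbTE hj).
rewrite oppr_ge0; apply: mulr_le0_ge0 => //; by case/andP: (h1 j s).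
Qed.

Lemma step k (phi : 'I_m -> 'I_k.+1 -> R) : (m < k.+1)%N -> is_scheme phi ->
  exists phi' : 'I_m -> 'I_k -> R,
    is_scheme phi' /\ revenue p v phi <= revenue p v phi'.
Proof.
move=> mk hs.
case: (boolP [exists s, [forall j, phi j s == 0]]).
  move=> /existsP [s0 /forallP h0].
  have [h1 h2] := @del _ _ s0 hs (fun j => eqP (h0 j)).
  by exists (fun j s => phi j (lift s0 s)); split => //; rewrite h2.
rewrite negb_exists => /forallP hnz.
have nz : forall s, exists j, phi j s != 0.
  by move=> s; have := hnz s; rewrite negb_forall => /existsP.
have [c0 [c0nz c0dep]] := @dep _ (fun s j => phi j s) mk.
pose sig (c : 'I_k.+1 -> R) := \sum_s c s * fval (fun j => phi j s).
have [c [cnz [cdep csig]]] : exists c : 'I_k.+1 -> R, (exists s, c s != 0) /\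
    (forall j, \sum_s c s * phi j s = 0) /\ sig c <= 0.
  case: (lerP (sig c0) 0) => hsig; first by exists c0.
  exists (fun s => - c0 s); split; last split.
  - by case: c0nz => s hs0; exists s; rewrite oppr_eq0.
  - by move=> j; under eq_bigr do rewrite mulNr; rewrite sumrN c0dep oppr0.
  - rewrite /sig; under eq_bigr do rewrite mulNr; rewrite sumrN oppr_le0.
    exact: ltW.
have [s1 hs1] := @pos_entry _ _ _ hs nz cnz cdep.
have [ss hss] := @exists_max _ _ c.
have css : 0 < c ss by apply: lt_le_trans hs1 (hss s1).
pose mu s := 1 - c s / c ss.
have mu0 : forall s, 0 <= mu s.
  by move=> s; rewrite /mu subr_ge0 ler_pdivrMr // mul1r.
have muss : mu ss = 0 by rewrite /mu divff ?subrr // gt_eqF.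
pose phi2 j s := mu s * phi j s.
have [hs1' hs2'] := hs.
have rows : forall j, \sum_s phi2 j s = 1.
  move=> j; rewrite /phi2 /mu.
  under eq_bigr do rewrite mulrBl mul1r.
  rewrite sumrB -(hs2' j).
  have -> : \sum_s c s / c ss * phi j s = (\sum_s c s * phi j s) / c ss.
    by rewrite mulr_suml; apply: eq_bigr => s _; rewrite mulrAC.
  by rewrite cdep mul0r subr0.
have nn : forall j s, 0 <= phi2 j s.
  by move=> j s; apply: mulr_ge0 => //; case/andP: (hs1' j s).
have hs2 : is_scheme phi2.
  split => // j s; rewrite nn /=; exact: le_one (nn j) (rows j).
have rv : revenue p v phi <= revenue p v phi2.
  rewrite !revenueE.
  have -> : \sum_s fval (fun j => phi2 j s) =
      \sum_s fval (fun j => phi j s) - sig c / c ss.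
    rewrite /sig mulr_suml -sumrB; apply: eq_bigr => s _.
    rewrite /phi2 fval_scale // /mu mulrBl mul1r; congr (_ - _).
    by rewrite mulrAC.
  have hq : sig c / c ss <= 0 by apply: mulr_le0_ge0 => //; rewrite invr_ge0; exact: ltW.
  by rewrite lerBrDr gerDl.
have h00 : forall j, phi2 j ss = 0 by move=> j; rewrite /phi2 muss mul0r.
have [h1 h2] := @del _ _ ss hs2 h00.
exists (fun j s => phi2 j (lift ss s)); split => //.
by rewrite -h2.
Qed.

Lemma reduce k (phi : 'I_m -> 'I_k -> R) : is_scheme phi ->
  exists phi2 : 'I_m -> 'I_m -> R, is_scheme phi2 /\ revenue p v phi <= revenue p v phi2.
Proof.
elim: k phi => [|k IH] phi hs.
  by apply: (@up m 0 phi) => //; rewrite add0n.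
case: (leqP k.+1 m) => hk.
  by apply: (@up (m - k.+1) k.+1 phi) => //; rewrite subnKC.
have [phi' [h1 h2]] := @step _ _ hk hs.
have [phi2 [h3 h4]] := IH phi' h1.
by exists phi2; split => //; apply: le_trans h2 h4.
Qed.
End Main.

Section Top.
Local Open Scope classical_set_scope.
Local Open Scope ring_scope.
Variable R : realType.
Variable N : nat.

Lemma coord_le (V : 'rV[R]_N) t : `|V ord0 t| <= `|V|.
Proof.
rewrite [leRHS]/Num.norm /= mx_normrE; apply/bigmax_geP; right => /=.
by exists (ord0, t).
Qed.

Lemma lip_cont (F : 'rV[R]_N -> R) (C : R) : 0 <= C ->
  (forall V W, `|F V - F W| <= C * `|V - W|) -> continuous F.
Proof.
move=> C0 hF x; apply/(@cvgrPdist_lt _ _ _ (nbhs x) (nbhs_filter x)) => e e0.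
have C1 : 0 < C + 1 by lra.
have := @cvgr_dist_lt _ _ _ (nbhs x) (nbhs_filter x) id x cvg_id _ (divr_gt0 e0 C1).
apply: filterS => y hy.
apply: le_lt_trans (hF x y) _.
apply: (@le_lt_trans _ _ ((C + 1) * `|x - y|)).
  by apply: ler_wpM2r => //; lra.
by rewrite mulrC -ltr_pdivlMr.
Qed.

Lemma closed_pre (f : 'rV[R]_N -> R) (A : set R) :
  continuous f -> closed A -> closed [set V | A (f V)].
Proof. by move=> cf cA; apply: preimage_closed => // x _; exact: cf. Qed.

Lemma coord_cont t : continuous (fun V : 'rV[R]_N => V ord0 t).
Proof. exact: coord_continuous. Qed.
End Top.

Section Top2.
Local Open Scope classical_set_scope.
Local Open Scope ring_scope.
Variable R : realType.
Variable m : nat.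

Definition toPhi (V : 'rV[R]_(m * m)) : 'I_m -> 'I_m -> R :=
  fun j s => V ord0 (mxvec_index j s).

Definition gsum (j : 'I_m) (V : 'rV[R]_(m * m)) := \sum_(s < m) toPhi V j s.

Lemma gsum_cont j : continuous (gsum j).
Proof.
apply: (@lip_cont _ _ _ m%:R) => // V W.
rewrite /gsum -sumrB.
apply: le_trans (ler_norm_sum _ _ _) _.
have -> : m%:R * `|V - W| = \sum_(s < m) `|V - W| by rewrite sumr_const card_ord mulr_natl.
apply: ler_sum => s _; rewrite /toPhi.
by have := @coord_le R _ (V - W) (mxvec_index j s); rewrite !mxE.
Qed.

Definition Dset := [set V : 'rV[R]_(m * m) | is_scheme (toPhi V)].

Lemma Dset_compact : compact Dset.
Proof.
pose S := (\bigcap_(t in setT) [set V : 'rV[R]_(m * m) | 0 <= V ord0 t]) `&`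
  (\bigcap_(t in setT) [set V : 'rV[R]_(m * m) | V ord0 t <= 1]) `&`
  (\bigcap_(j in setT) [set V | gsum j V = 1]).
have -> : Dset = S.
  apply/seteqP; split => V /=.
  - move=> [h1 h2]; split; [split|].
    + by move=> t _; case/mxvec_indexP: t => j s; have /andP[] := h1 j s.
    + by move=> t _; case/mxvec_indexP: t => j s; have /andP[] := h1 j s.
    + by move=> j _; exact: h2.
  - move=> [[h1 h2] h3]; split.
    + by move=> j s; rewrite /toPhi h1 ?h2.
    + by move=> j; exact: h3.
apply: (@subclosed_compact _ _
   [set v : 'rV[R]_(m * m) | forall i, `[0, 1]%classic (v ord0 i)]).
- have c1 := @closed_bigI _ _ setT (fun t => [set V : 'rV[R]_(m * m) | 0 <= V ord0 t])
     (fun t _ => @closed_pre R _ _ _ (@coord_cont R _ t) (@closed_ge R 0)).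
  have c2 := @closed_bigI _ _ setT (fun t => [set V : 'rV[R]_(m * m) | V ord0 t <= 1])
     (fun t _ => @closed_pre R _ _ _ (@coord_cont R _ t) (@closed_le R 1)).
  have c3 := @closed_bigI _ _ setT (fun j => [set V : 'rV[R]_(m * m) | gsum j V = 1])
     (fun j _ => @closed_pre R _ _ _ (gsum_cont j) (@closed_eq R 1)).
  exact: (closedI (closedI c1 c2) c3).
- exact: (@rV_compact R (m * m) (fun=> `[0%R : R, 1]%classic) (fun=> @segment_compact R 0 1)).
- move=> V [[h1 h2] _] i /=; rewrite in_itv /=; apply/andP; split.
  + exact: h1.
  + exact: h2.
Qed.
End Top2.
Arguments toPhi {R m}.

Section Final.
Local Open Scope classical_set_scope.
Local Open Scope ring_scope.

Lemma obj_lip (R : realType) (n m : nat) (hn : (2 <= n)%N)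
  (p : 'I_m -> R) (v : 'I_n -> 'I_m -> R)
  (hp0 : forall j, 0 <= p j) (hv : forall i j, 0 <= v i j) :
  continuous (fun V : 'rV[R]_(m * m) => revenue p v (toPhi V)).
Proof.
pose Cs := \sum_(i < n) \sum_(j < m) p j * v i j.
have Cs0 : 0 <= Cs by apply: sumr_ge0 => i _; apply: sumr_ge0 => j _; apply: mulr_ge0.
apply: (@lip_cont R (m * m) (fun V => revenue p v (toPhi V)) (m%:R * Cs)); first by apply: mulr_ge0.
move=> V W; rewrite /revenue -sumrB.
apply: le_trans (ler_norm_sum _ _ _) _.
have -> : m%:R * Cs * `|V - W| = \sum_(s < m) (Cs * `|V - W|).
  by rewrite sumr_const card_ord -mulr_natr; ring.
apply: ler_sum => s _; apply: max2_lip => // i.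
rewrite -sumrB; apply: le_trans (ler_norm_sum _ _ _) _.
apply: (@le_trans _ _ (\sum_(j < m) (p j * v i j) * `|V - W|)).
  apply: ler_sum => j _; rewrite -mulrBr normrM ger0_norm; last exact: mulr_ge0.
  apply: ler_wpM2l; first exact: mulr_ge0.
  by have := @coord_le R _ (V - W) (mxvec_index j s); rewrite !mxE.
rewrite -mulr_suml; apply: ler_wpM2r => //.
by rewrite /Cs (bigD1 i) //= lerDl; apply: sumr_ge0 => i' _; apply: sumr_ge0 => j _; apply: mulr_ge0.
Qed.
End Final.

Theorem mainTheorem2 (R : realType) (n m : nat) (hn : (2 <= n)%N)
  (p : 'I_m -> R) (v : 'I_n -> 'I_m -> R)
  (hp0 : forall j, 0 <= p j) (hp1 : \sum_(j < m) p j = 1)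
  (hv : forall i j, 0 <= v i j) :
  exists (k : nat) (phi : 'I_m -> 'I_k -> R),
    (k <= m + minn 'C(n, 2) 'C(m, 2))%N /\ is_scheme phi /\
    forall (k' : nat) (phi' : 'I_m -> 'I_k' -> R),
      is_scheme phi' -> revenue p v phi' <= revenue p v phi.
Proof.
pose G := fun V : 'rV[R]_(m * m) => revenue p v (toPhi V).
have cG := @obj_lip R n m hn p v hp0 hv.
have toPhiE : forall phi : 'I_m -> 'I_m -> R, forall j s,
    toPhi (mxvec (\matrix_(j0, s0) phi j0 s0)) j s = phi j s.
  by move=> phi j s; rewrite /toPhi mxvecE mxE.
have ne : (Dset R m !=set0)%classic.
  exists (mxvec (\matrix_(j0, s0) ((j0 == s0)%:R : R))).
  apply: (@scheme_ext R m m (fun j s => (j == s)%:R)); first by move=> j s; rewrite toPhiE.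
  split.
  - by move=> j s; case: (j == s); rewrite ?lexx ?ler01.
  - by move=> j; rewrite (bigD1 j) //= eqxx big1 ?addr0 // => s /negbTE; rewrite eq_sym => ->.
have [Vs hVs hmax] := compact_EVT_max ne (@Dset_compact R m) (continuous_subspaceT cG).
exists m, (toPhi Vs); split; first exact: leq_addr.
have hVs' : is_scheme (toPhi Vs) by move: hVs; rewrite inE.
split => // k' phi' hs.
have [phi2 [h2 h3]] := @reduce R n m hn p v _ _ hs.
apply: le_trans h3 _.
have e : revenue p v phi2 = G (mxvec (\matrix_(j0, s0) phi2 j0 s0)).
  by apply: revenue_ext => j s; rewrite toPhiE.
rewrite e; apply: hmax; rewrite inE /Dset /=.
by apply: scheme_ext h2 => j s; rewrite toPhiE.
Qed.
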